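(* Let $(\mathbb{H}, \langle\cdot,\cdot\rangle)$ be a separable real Hilbert space of functions $\mathcal{X} \to \mathbb{R}$, and let $G$ be a group acting linearly on $\mathbb{H}$ from the left such that $\langle g f_1, g f_2\rangle = \langle f_1, f_2\rangle$ for all $f_1, f_2 \in \mathbb{H}$ and $g \in G$. Let $T\colon \mathbb{H}\to\mathbb{H}$ be a bounded linear operator which is compact. Then there exist a sequence of continuous (possibly nonlinear) operators $E_n\colon \mathbb{H}^{1+2n}\to \mathbb{H}$, $n\ge 1$, and a sequence of functions $(t_n)_{n\ge1}\subseteq \mathbb{H}$ such that every $E_n$ is $G$-equivariant, i.e. \[ E_n(g f_1, g f_2, \ldots, g f_{2n+1}) = g\,E_n(f_1, f_2, \ldots, f_{2n+1}) \quad\text{for all } g\in G \text{ and } f_1,\ldots,f_{2n+1}\in\mathbb{H}, \] and \[ \big\| T - E_n(\,\cdot\,, t_1, \ldots, t_{2n}) \big\| \to 0 \quad (n\to\infty), \] where $\|S\| = \sup_{f\in\mathbb{H},\,\|f\|\le 1}\|S(f)\|$ denotes the operator norm of a map $S\colon\mathbb{H}\to\mathbb{H}$.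
   Context: A bounded linear operator on $\mathbb{H}$ is compact if the image of every bounded set is relatively compact. The group action is linear: $g(f_1+f_2) = gf_1 + gf_2$ (and $g(\lambda f)=\lambda gf$), and it is a left action ($ef = f$, $h(gf) = (hg)f$). *)

(* Defs.v *)
From HB Require Import structures.
From mathcomp Require Import all_boot all_order all_algebra.
From mathcomp Require Import all_classical all_reals all_analysis.
Set Implicit Arguments. Unset Strict Implicit. Unset Printing Implicit Defensive.
Import Order.TTheory GRing.Theory Num.Theory.
Import numFieldNormedType.Exports.
Local Open Scope classical_set_scope.
Local Open Scope ring_scope.

Definition is_group (G : Type) (mul : G -> G -> G) (one : G) (inv : G -> G) :=
  [/\ forall a b c, mul a (mul b c) = mul (mul a b) c,
      forall a, mul one a = a & forall a, mul (inv a) a = one].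

Definition is_inner_product (R : realType) (H : normedModType R)
  (ip : H -> H -> R) :=
  [/\ forall f1 f2, ip f1 f2 = ip f2 f1,
      forall a f1 f2 f3, ip (a *: f1 + f2) f3 = a * ip f1 f3 + ip f2 f3,
      forall f, 0 <= ip f f
    & forall f, `|f| = Num.sqrt (ip f f)].

Definition separable (T : topologicalType) :=
  exists D : set T, countable D /\ closure D = setT.

Definition bounded_subset (R : realType) (H : normedModType R) (B : set H) :=
  exists M : R, forall f, B f -> `|f| <= M.

Definition compact_operator (R : realType) (H : normedModType R) (T : H -> H) :=
  forall B : set H, bounded_subset B -> compact (closure (T @` B)).

Definition bounded_operator (R : realType) (H : normedModType R) (T : H -> H) :=
  exists M : R, forall f, `|T f| <= M * `|f|.

(* continuity on H^k with the product topology (max-norm, epsilon-delta) *)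
Definition continuous_multi (R : realType) (H : normedModType R) (k : nat)
  (E : ('I_k -> H) -> H) :=
  forall (x : 'I_k -> H) (eps : R), 0 < eps ->
    exists2 delta : R, 0 < delta &
      forall y : 'I_k -> H, (forall i, `|x i - y i| < delta) -> `|E x - E y| < eps.

(* operator norm sup_{|f| <= 1} |S f|, in the extended reals
   (may be +oo for a nonlinear S) *)
Definition op_norm (R : realType) (H : normedModType R) (S : H -> H) : \bar R :=
  ereal_sup [set (`|S f|)%:E | f in [set f : H | `|f| <= 1]].

(* the argument vector (f, t_1, ..., t_{2n}) of length 2n+1 *)
Definition args (H : Type) (n : nat) (f : H) (t : nat -> H) : 'I_(2 * n).+1 -> H :=
  fun i => if nat_of_ord i == 0%N then f else t (nat_of_ord i).

(* Main.v *)
Require Import Defs.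
From HB Require Import structures.
From mathcomp Require Import all_boot all_order all_algebra.
From mathcomp Require Import all_classical all_reals all_analysis.
From mathcomp Require Import ring lra zify.
Import Order.TTheory GRing.Theory Num.Theory.
Import numFieldNormedType.Exports.
Local Open Scope classical_set_scope.
Local Open Scope ring_scope.

Lemma ip0l {R : realType} {H : normedModType R} {ip : H -> H -> R} :
  is_inner_product ip -> forall g, ip 0 g = 0.
Proof.
case=> _ hl _ _ g; have := hl 1 0 0 g; rewrite scale1r addr0 mul1r => h.
by apply: (addrI (ip 0 g)); rewrite addr0 -h.
Qed.

Lemma ipDl {R : realType} {H : normedModType R} {ip : H -> H -> R} :
  is_inner_product ip -> forall f g h, ip (f + g) h = ip f h + ip g h.
Proof. by case=> _ hl _ _ f g h; rewrite -[f]scale1r hl mul1r scale1r. Qed.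

Lemma ipZl {R : realType} {H : normedModType R} {ip : H -> H -> R} :
  is_inner_product ip -> forall a f h, ip (a *: f) h = a * ip f h.
Proof.
move=> hip a f h; have := hip; case=> _ hl _ _.
by rewrite -[a *: f]addr0 hl (ip0l hip) addr0.
Qed.

Lemma ipNl {R : realType} {H : normedModType R} {ip : H -> H -> R} :
  is_inner_product ip -> forall f h, ip (- f) h = - ip f h.
Proof. by move=> hip f h; rewrite -scaleN1r (ipZl hip) mulN1r. Qed.

Lemma ipBl {R : realType} {H : normedModType R} {ip : H -> H -> R} :
  is_inner_product ip -> forall f g h, ip (f - g) h = ip f h - ip g h.
Proof. by move=> hip f g h; rewrite (ipDl hip) (ipNl hip). Qed.

Lemma ipC {R : realType} {H : normedModType R} {ip : H -> H -> R} :
  is_inner_product ip -> forall f g, ip f g = ip g f.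
Proof. by case. Qed.

Lemma ip0r {R : realType} {H : normedModType R} {ip : H -> H -> R} :
  is_inner_product ip -> forall g, ip g 0 = 0.
Proof. by move=> hip g; rewrite (ipC hip) (ip0l hip). Qed.

Lemma ipDr {R : realType} {H : normedModType R} {ip : H -> H -> R} :
  is_inner_product ip -> forall f g h, ip h (f + g) = ip h f + ip h g.
Proof. by move=> hip f g h; rewrite !(ipC hip h) (ipDl hip). Qed.

Lemma ipZr {R : realType} {H : normedModType R} {ip : H -> H -> R} :
  is_inner_product ip -> forall a f h, ip h (a *: f) = a * ip h f.
Proof. by move=> hip a f h; rewrite !(ipC hip h) (ipZl hip). Qed.

Lemma ipBr {R : realType} {H : normedModType R} {ip : H -> H -> R} :
  is_inner_product ip -> forall f g h, ip h (f - g) = ip h f - ip h g.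
Proof. by move=> hip f g h; rewrite !(ipC hip h) (ipBl hip). Qed.

Lemma ip_ge0 {R : realType} {H : normedModType R} {ip : H -> H -> R} :
  is_inner_product ip -> forall f, 0 <= ip f f.
Proof. by case. Qed.

Lemma ip_norm2 {R : realType} {H : normedModType R} {ip : H -> H -> R} :
  is_inner_product ip -> forall f, `|f| ^+ 2 = ip f f.
Proof.
move=> hip f; have := hip; case=> _ _ h0 ->; by rewrite sqr_sqrtr.
Qed.

Lemma ip_CS {R : realType} {H : normedModType R} {ip : H -> H -> R} :
  is_inner_product ip -> forall f g, `|ip f g| <= `|f| * `|g|.
Proof.
move=> hip f g.
have key : ip f g ^+ 2 <= ip f f * ip g g.
  have [g0|gn0] := eqVneq g 0.
    by rewrite g0 (ip0r hip) (ip0l hip) expr2 mul0r mulr0.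
  have Bp : 0 < ip g g by rewrite -(ip_norm2 hip) exprn_gt0 // normr_gt0.
  set l := ip f g / ip g g.
  have := ip_ge0 hip (f - l *: g).
  rewrite (ipBl hip) !(ipBr hip) !(ipZl hip) !(ipZr hip) (ipC hip g f).
  rewrite /l => h.
  have e : ip f g / ip g g * ip g g = ip f g by rewrite divfK // gt_eqF.
  rewrite e subrr subr0 in h.
  have cu : ip f g = l * ip g g by rewrite /l e.
  move: h; rewrite -/l => h.
  move: cu h Bp; set A := ip f f; set B := ip g g; set c := ip f g => cu h Bp.
  nra.
have hf := ip_norm2 hip f; have hg := ip_norm2 hip g.
have := normr_ge0 f; have := normr_ge0 g.
move: key hf hg; set a := `|f|; set b := `|g|; set c := ip f g.
set A := ip f f; set B := ip g g => key hf hg hb ha.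
have k2 : c ^+ 2 <= (a * b) ^+ 2 by rewrite exprMn hf hg.
have p0 : 0 <= a * b by exact: mulr_ge0.
move: k2 p0; set p := a * b => k2 p0.
have [c0|c0] := lerP 0 c; [rewrite ger0_norm // | rewrite ltr0_norm //]; nra.
Qed.
Lemma arith {R : realType} (a b c di dj dl ai aj P Q r d eps : R) :
  0 <= a -> 0 <= b -> 0 <= c -> 0 <= di -> 0 <= dj -> 0 <= dl -> 0 <= ai -> 0 <= aj ->
  P <= di * b -> Q <= ai * dj -> r <= ai * aj -> 0 <= P -> 0 <= Q -> 0 <= r ->
  di < d -> dj < d -> dl < d -> ai <= a + di -> aj <= b + dj -> d <= 1 ->
  d * (3 * (a + b + c + 1) ^+ 2) <= eps ->
  (P + Q) * c + r * dl < eps.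
Proof.
move=> ? ? ? ? ? ? ? ? ? ? ? ? ? ? ? ? ? ? ? ? hde; move: hde; set S := a + b + c + 1 => hde.
have hai : ai <= S by rewrite /S; lra.
have haj : aj <= S by rewrite /S; lra.
have hb : b <= S by rewrite /S; lra.
have hc : c <= S by rewrite /S; lra.
have S0 : 0 < S by rewrite /S; lra.
have hP : P <= d * S.
  have : di * b <= d * S by apply: ler_pM; lra.
  lra.
have hQ : Q <= S * d.
  have : ai * dj <= S * d by apply: ler_pM; lra.
  lra.
have hr : r <= S * S.
  have : ai * aj <= S * S by apply: ler_pM; lra.
  lra.
have h1 : (P + Q) * c <= (2 * d * S) * S.
  apply: ler_pM; lra.
have h2 : r * dl < (S * S) * d.
  apply: (le_lt_trans (ler_pM _ _ hr (lexx dl))) => //.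
  by rewrite ltr_pM2l // mulr_gt0.
have : (2 * d * S) * S + (S * S) * d = d * (3 * S ^+ 2) by rewrite expr2; ring.
lra.
Qed.

Lemma cm_add {R : realType} {H : normedModType R} {k : nat}
  (E1 E2 : ('I_k -> H) -> H) :
  continuous_multi E1 -> continuous_multi E2 ->
  continuous_multi (fun x => E1 x + E2 x).
Proof.
move=> c1 c2 x eps e0.
have e2 : 0 < eps / 2 by rewrite divr_gt0.
have [d1 d10 h1] := c1 x _ e2; have [d2 d20 h2] := c2 x _ e2.
exists (Num.min d1 d2); first by rewrite lt_min d10 d20.
move=> y hy.
have hy1 : forall i, `|x i - y i| < d1 by move=> i; have := hy i; rewrite lt_min => /andP[].
have hy2 : forall i, `|x i - y i| < d2 by move=> i; have := hy i; rewrite lt_min => /andP[].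
have := h1 _ hy1; have := h2 _ hy2.
have -> : E1 x + E2 x - (E1 y + E2 y) = (E1 x - E1 y) + (E2 x - E2 y).
  by rewrite opprD addrACA.
move=> a b; apply: (le_lt_trans (ler_normD _ _)); lra.
Qed.

Lemma cm_0 {R : realType} {H : normedModType R} {k : nat} :
  continuous_multi (fun _ : 'I_k -> H => (0 : H)).
Proof. by move=> x eps e0; exists 1 => // y _; rewrite subrr normr0. Qed.

Lemma cm_term {R : realType} {H : normedModType R} {ip : H -> H -> R} {k : nat}
  (i j l : 'I_k) : is_inner_product ip ->
  continuous_multi (fun fs : 'I_k -> H => ip (fs i) (fs j) *: fs l).
Proof.
move=> hip x eps e0.
pose S := `|x i| + `|x j| + `|x l| + 1.
have S1 : 1 <= S by rewrite /S lerDr !addr_ge0.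
have S0 : 0 < S by apply: lt_le_trans S1; rewrite ltr01.
pose d := Num.min 1 (eps / (3 * S ^+ 2)).
have d0 : 0 < d by rewrite lt_min ltr01 divr_gt0 // mulr_gt0 // exprn_gt0.
exists d => // y hy.
have hd1 : d <= 1 by rewrite ge_min lexx.
have hde : d * (3 * S ^+ 2) <= eps.
  by rewrite -ler_pdivlMr ?mulr_gt0 ?exprn_gt0 // ge_min lexx orbT.
have ny : forall m, `|y m| <= `|x m| + `|x m - y m|.
  move=> m; have {1}-> : y m = x m - (x m - y m) by rewrite opprB addrC subrK.
  exact: ler_normB.
have xyi := hy i; have xyj := hy j; have xyl := hy l.
have yi := ny i; have yj := ny j.
have eq1 : ip (x i) (x j) *: x l - ip (y i) (y j) *: y l
   = (ip (x i - y i) (x j) + ip (y i) (x j - y j)) *: x l + ip (y i) (y j) *: (x l - y l).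
  rewrite (ipBl hip) (ipBr hip).
  have -> : ip (x i) (x j) - ip (y i) (x j) + (ip (y i) (x j) - ip (y i) (y j)) = ip (x i) (x j) - ip (y i) (y j) by ring.
  by rewrite scalerBl scalerBr addrA subrK.
rewrite eq1; apply: (le_lt_trans (ler_normD _ _)); rewrite !normrZ.
have c1 := ip_CS hip (x i - y i) (x j).
have c2 := ip_CS hip (y i) (x j - y j).
have c3 := ip_CS hip (y i) (y j).
have n1 := ler_normD (ip (x i - y i) (x j)) (ip (y i) (x j - y j)).
apply: (@le_lt_trans _ _ ((`|ip (x i - y i) (x j)| + `|ip (y i) (x j - y j)|) * `|x l| + `|ip (y i) (y j)| * `|x l - y l|)).
  by rewrite lerD2r ler_wpM2r.
exact: (@arith R _ _ _ _ _ _ _ _ _ _ _ _ _ (normr_ge0 (x i)) (normr_ge0 (x j)) (normr_ge0 (x l)) (normr_ge0 _) (normr_ge0 _) (normr_ge0 _) (normr_ge0 (y i)) (normr_ge0 (y j)) c1 c2 c3 (normr_ge0 _) (normr_ge0 _) (normr_ge0 _) xyi xyj xyl yi yj hd1 hde).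
Qed.

Fixpoint Esum {R : realType} {H : normedModType R} (ip : H -> H -> R) (n k : nat)
  (fs : 'I_(2 * n).+1 -> H) : H :=
  match k with
  | 0 => 0
  | k'.+1 => Esum ip n k' fs + ip (fs (inord k'.*2.+1)) (fs ord0) *: fs (inord k'.*2.+2)
  end.

Lemma Esum_cont {R : realType} {H : normedModType R} {ip : H -> H -> R} (n k : nat) :
  is_inner_product ip -> continuous_multi (Esum ip n k).
Proof.
move=> hip; elim: k => [|k IH] /=; first exact: cm_0.
exact: (cm_add _ _ IH (cm_term _ _ _ hip)).
Qed.

Lemma act0 {R : realType} {H : normedModType R} {A : H -> H} :
  (forall f1 f2, A (f1 + f2) = A f1 + A f2) -> A 0 = 0.
Proof.
move=> hA; have := hA 0 0; rewrite addr0 => h.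
by apply: (addrI (A 0)); rewrite addr0 -h.
Qed.

Lemma Esum_equiv {R : realType} {H : normedModType R} {ip : H -> H -> R} (n k : nat)
  (A : H -> H) :
  (forall f1 f2, A (f1 + f2) = A f1 + A f2) ->
  (forall (a : R) f, A (a *: f) = a *: A f) ->
  (forall f1 f2, ip (A f1) (A f2) = ip f1 f2) ->
  forall fs, Esum ip n k (fun i => A (fs i)) = A (Esum ip n k fs).
Proof.
move=> hD hZ hI fs; elim: k => [|k IH] /=; first by rewrite (act0 hD).
by rewrite IH hD hZ hI.
Qed.

Fixpoint Pr {R : realType} {H : normedModType R} (ip : H -> H -> R) (x : nat -> H)
  (k : nat) (f : H) : H :=
  match k with
  | 0 => 0
  | k'.+1 => Pr ip x k' f + ip f (x k') *: x k'
  end.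

Definition tseq {R : realType} {H : normedModType R} (T : H -> H) (x : nat -> H) (j : nat) : H :=
  if odd j then x j./2 else T (x j.-1./2).

Lemma Esum_args {R : realType} {H : normedModType R} {ip : H -> H -> R} (T : H -> H)
  (x : nat -> H) (n : nat) (f : H) :
  is_inner_product ip ->
  (forall f1 f2, T (f1 + f2) = T f1 + T f2) ->
  (forall (a : R) f, T (a *: f) = a *: T f) ->
  forall k, (k <= n)%N -> Esum ip n k (@args H n f (tseq T x)) = T (Pr ip x k f).
Proof.
move=> hip hD hZ; elim=> [|k IH] kn /=; first by rewrite (act0 hD).
rewrite IH; last by lia.
rewrite hD hZ /args /= !inordK; last by lia.
  rewrite /tseq /= odd_double /= uphalf_double /=.
  by rewrite (ipC hip).
lia.
Qed.

Lemma Pr_high {R : realType} {H : normedModType R} {ip : H -> H -> R} (x : nat -> H) f :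
  is_inner_product ip -> (forall i j, i <> j -> ip (x i) (x j) = 0) ->
  forall k j, (k <= j)%N -> ip (Pr ip x k f) (x j) = 0.
Proof.
move=> hip ho; elim=> [|k IH] j kj /=; first exact: (ip0l hip).
rewrite (ipDl hip) (ipZl hip) IH; last by lia.
by rewrite ho ?mulr0 ?addr0 //; lia.
Qed.

Lemma Pr_low {R : realType} {H : normedModType R} {ip : H -> H -> R} (x : nat -> H) f :
  is_inner_product ip -> (forall i j, i <> j -> ip (x i) (x j) = 0) ->
  (forall i, x i = 0 \/ ip (x i) (x i) = 1) ->
  forall k j, (j < k)%N -> ip (Pr ip x k f) (x j) = ip f (x j).
Proof.
move=> hip ho hu; elim=> [|k IH] j kj //=.
rewrite (ipDl hip) (ipZl hip).
have [jk|jk] := ltnP j k.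
  by rewrite IH // ho ?mulr0 ?addr0 //; lia.
have -> : j = k by lia.
rewrite (Pr_high _ _ hip ho) // add0r.
by case: (hu k) => [->|->]; rewrite ?mulr1 // !(ip0r hip) mulr0.
Qed.

Lemma res_orth {R : realType} {H : normedModType R} {ip : H -> H -> R} (x : nat -> H) f :
  is_inner_product ip -> (forall i j, i <> j -> ip (x i) (x j) = 0) ->
  (forall i, x i = 0 \/ ip (x i) (x i) = 1) ->
  forall k j, (j < k)%N -> ip (f - Pr ip x k f) (x j) = 0.
Proof.
by move=> hip ho hu k j jk; rewrite (ipBl hip) (Pr_low _ _ hip ho hu) // subrr.
Qed.

Lemma res_Pr {R : realType} {H : normedModType R} {ip : H -> H -> R} (x : nat -> H) f :
  is_inner_product ip -> (forall i j, i <> j -> ip (x i) (x j) = 0) ->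
  (forall i, x i = 0 \/ ip (x i) (x i) = 1) ->
  forall k k', (k' <= k)%N -> ip (f - Pr ip x k f) (Pr ip x k' f) = 0.
Proof.
move=> hip ho hu k; elim=> [|k' IH] kk /=; first exact: (ip0r hip).
rewrite (ipDr hip) (ipZr hip) IH; last by lia.
by rewrite (res_orth _ _ hip ho hu) ?mulr0 ?addr0 //; lia.
Qed.

Lemma pyth {R : realType} {H : normedModType R} {ip : H -> H -> R} :
  is_inner_product ip -> forall h P, ip h P = 0 -> ip (h + P) (h + P) = ip h h + ip P P.
Proof.
move=> hip h P hP; rewrite (ipDl hip) !(ipDr hip) hP (ipC hip P h) hP.
by rewrite addr0 add0r.
Qed.

Lemma res_norm {R : realType} {H : normedModType R} {ip : H -> H -> R} (x : nat -> H) f :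
  is_inner_product ip -> (forall i j, i <> j -> ip (x i) (x j) = 0) ->
  (forall i, x i = 0 \/ ip (x i) (x i) = 1) ->
  forall k, `|f - Pr ip x k f| <= `|f|.
Proof.
move=> hip ho hu k.
have e2 : `|f| ^+ 2 = `|f - Pr ip x k f| ^+ 2 + ip (Pr ip x k f) (Pr ip x k f).
  rewrite !(ip_norm2 hip) -(pyth hip) ?subrK //.
  exact: (res_Pr _ _ hip ho hu).
have := ip_ge0 hip (Pr ip x k f); have := normr_ge0 f; have := normr_ge0 (f - Pr ip x k f).
move: e2; set a := `|f|; set b := `|f - _|; set c := ip _ _ => e2 hb ha hc.
nra.
Qed.

Definition Sset {R : realType} {H : normedModType R} (ip : H -> H -> R) (y : nat -> H) (m : nat) : set H :=
  [set f | `|f| <= 1 /\ forall j, (j < m)%N -> ip f (y j) = 0].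

Definition sv {R : realType} {H : normedModType R} (ip : H -> H -> R) (T : H -> H) (y : nat -> H) (m : nat) : R :=
  sup [set `|T f| | f in Sset ip y m].

Definition Pchoose {R : realType} {H : normedModType R} (ip : H -> H -> R) (T : H -> H) (y : nat -> H) (m : nat) : set H :=
  [set g | ip g g = 1 /\ (forall j, (j < m)%N -> ip g (y j) = 0) /\ sv ip T y m / 2 < `|T g|].

Fixpoint Xs {R : realType} {H : normedModType R} (ip : H -> H -> R) (T : H -> H) (m : nat) : nat -> H :=
  match m with
  | 0 => fun _ => 0
  | m'.+1 => fun k => if k == m' then xget 0 (Pchoose ip T (Xs ip T m') m') else Xs ip T m' k
  end.

Definition xs {R : realType} {H : normedModType R} (ip : H -> H -> R) (T : H -> H) (k : nat) : H :=
  Xs ip T k.+1 k.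

Lemma Xs_stable {R : realType} {H : normedModType R} (ip : H -> H -> R) (T : H -> H) :
  forall m k, (k < m)%N -> Xs ip T m k = xs ip T k.
Proof.
elim=> [|m IH] k // km /=.
case: eqP => [->|kn]; first by rewrite /xs /= eqxx.
by apply: IH; lia.
Qed.

Lemma Sset_ext {R : realType} {H : normedModType R} (ip : H -> H -> R) (y y' : nat -> H) m :
  (forall j, (j < m)%N -> y j = y' j) -> Sset ip y m = Sset ip y' m.
Proof.
move=> e; rewrite /Sset; apply/seteqP; split => f /= [f1 hf]; split => // j jm.
  by rewrite -e // hf.
by rewrite e // hf.
Qed.

Lemma Pchoose_ext {R : realType} {H : normedModType R} (ip : H -> H -> R) T (y y' : nat -> H) m :
  (forall j, (j < m)%N -> y j = y' j) -> Pchoose ip T y m = Pchoose ip T y' m.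
Proof.
move=> e; rewrite /Pchoose /sv (Sset_ext _ _ _ _ e); apply/seteqP; split => f /= [f1 [hf h2]]; split => //; split => // j jm.
  by rewrite -e // hf.
by rewrite e // hf.
Qed.

Lemma xs_rec {R : realType} {H : normedModType R} (ip : H -> H -> R) (T : H -> H) m :
  xs ip T m = xget 0 (Pchoose ip T (xs ip T) m).
Proof.
rewrite /xs /= eqxx; congr xget; apply: Pchoose_ext => j jm; exact: Xs_stable.
Qed.

Lemma xs_prop {R : realType} {H : normedModType R} (ip : H -> H -> R) (T : H -> H) m :
  xs ip T m = 0 \/ Pchoose ip T (xs ip T) m (xs ip T m).
Proof.
rewrite xs_rec; case: xgetP => [y _ Py|nP]; [right|left] => //.
Qed.

Lemma xs_orth {R : realType} {H : normedModType R} {ip : H -> H -> R} (T : H -> H) :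
  is_inner_product ip -> forall i j, i <> j -> ip (xs ip T i) (xs ip T j) = 0.
Proof.
move=> hip.
have key : forall i j, (j < i)%N -> ip (xs ip T i) (xs ip T j) = 0.
  move=> i j ji; case: (xs_prop ip T i) => [->|[_ [h _]]]; first exact: (ip0l hip).
  exact: h.
move=> i j ij; have [l|l] := ltnP j i; first exact: key.
rewrite (ipC hip) key //; lia.
Qed.

Lemma xs_unit {R : realType} {H : normedModType R} {ip : H -> H -> R} (T : H -> H) :
  forall i, xs ip T i = 0 \/ ip (xs ip T i) (xs ip T i) = 1.
Proof. by move=> i; case: (xs_prop ip T i) => [->|[h _]]; [left|right]. Qed.

Lemma sv_has_sup {R : realType} {H : normedModType R} {ip : H -> H -> R} (T : H -> H) (M : R) y m :
  is_inner_product ip -> (forall f1 f2, T (f1 + f2) = T f1 + T f2) ->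
  (forall f, `|T f| <= M * `|f|) -> 0 <= M ->
  has_sup [set `|T f| | f in Sset ip y m].
Proof.
move=> hip hT hM M0; split.
  exists `|T 0|, 0; split; first by rewrite normr0.
  by move=> j _; exact: (ip0l hip).
exists M => _ [f [f1 _] <-].
apply: (le_trans (hM f)); rewrite -[leRHS]mulr1; exact: ler_wpM2l.
Qed.

Lemma sv_bound {R : realType} {H : normedModType R} {ip : H -> H -> R} (T : H -> H) (M : R) y m :
  is_inner_product ip -> (forall f1 f2, T (f1 + f2) = T f1 + T f2) ->
  (forall f, `|T f| <= M * `|f|) -> 0 <= M ->
  forall f, Sset ip y m f -> `|T f| <= sv ip T y m.
Proof.
move=> hip hT hM M0 f hf; apply: (sup_upper_bound (sv_has_sup _ _ _ _ hip hT hM M0)).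
by exists f.
Qed.

Lemma sv_ge0 {R : realType} {H : normedModType R} {ip : H -> H -> R} (T : H -> H) (M : R) y m :
  is_inner_product ip -> (forall f1 f2, T (f1 + f2) = T f1 + T f2) ->
  (forall f, `|T f| <= M * `|f|) -> 0 <= M ->
  0 <= sv ip T y m.
Proof.
move=> hip hT hM M0; apply: le_trans (sv_bound T M y m hip hT hM M0 0 _) => //.
split; first by rewrite normr0.
by move=> j _; exact: (ip0l hip).
Qed.

Lemma sv_mono {R : realType} {H : normedModType R} {ip : H -> H -> R} (T : H -> H) (M : R) y m m' :
  is_inner_product ip -> (forall f1 f2, T (f1 + f2) = T f1 + T f2) ->
  (forall f, `|T f| <= M * `|f|) -> 0 <= M ->
  (m <= m')%N -> sv ip T y m' <= sv ip T y m.
Proof.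
move=> hip hT hM M0 mm; apply: ge_sup.
  by case: (sv_has_sup T M y m' hip hT hM M0).
move=> _ [f [f1 hf] <-]; apply: (sv_bound _ _ _ _ hip hT hM M0); split => // j jm.
apply: hf; lia.
Qed.

Lemma norm_tri {R : realType} {H : normedModType R} (a b : H) : `|a| <= `|b| + `|b - a|.
Proof.
have {1}-> : a = b - (b - a) by rewrite opprB addrC subrK.
exact: ler_normB.
Qed.

Lemma final_arith {R : realType} (e M n a t r : R) :
  0 < e -> 0 <= M -> 3 * e / 8 < a -> n * a <= t + n * (e / 8) -> t <= M * r ->
  r ^+ 2 = n -> 0 <= r -> 16 * M ^+ 2 / e ^+ 2 < n -> False.
Proof.
move=> e0 M0 ha hna ht hr r0 hn.
have e20 : 0 < e ^+ 2 by rewrite exprn_gt0.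
have hn2 : 16 * M ^+ 2 < n * e ^+ 2 by rewrite -ltr_pdivrMr.
have n0 : 0 < n.
  apply: le_lt_trans hn; apply: divr_ge0; last exact: ltW.
  by rewrite mulr_ge0 // exprn_ge0.
have h1 : n * (3 * e / 8) <= n * a by rewrite ler_pM2l // ltW.
have h2 : n * e / 4 <= M * r by lra.
have h3 : (n * e / 4) ^+ 2 <= (M * r) ^+ 2.
  rewrite ler_pXn2r // ?nnegrE //; last exact: mulr_ge0.
  apply: divr_ge0 => //; apply: mulr_ge0; exact: ltW.
move: h3; rewrite [(M * r) ^+ 2]exprMn hr => h3.
have : n * (16 * M ^+ 2) < n * (n * e ^+ 2) by rewrite ltr_pM2l.
move: h3; rewrite !expr2 => h3 h4.
nra.
Qed.

Lemma sv_to0 {R : realType} {H : normedModType R} {ip : H -> H -> R} (T : H -> H) (M : R) :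
  is_inner_product ip -> (forall f1 f2, T (f1 + f2) = T f1 + T f2) ->
  (forall (a : R) f, T (a *: f) = a *: T f) ->
  (forall f, `|T f| <= M * `|f|) -> 0 <= M -> compact_operator T ->
  forall e, 0 < e -> exists N, sv ip T (xs ip T) N <= e.
Proof.
move=> hip hT hZ hM M0 hC e e0.
case: (pselect (exists N, sv ip T (xs ip T) N <= e)) => // hn; exfalso.
have hs : forall N, e < sv ip T (xs ip T) N.
  by move=> N; rewrite ltNge; apply/negP => h; apply: hn; exists N.
have T0 : T 0 = 0 := act0 hT.
have step1 : forall m, Pchoose ip T (xs ip T) m (xs ip T m).
  move=> m; rewrite [X in Pchoose _ _ _ _ X]xs_rec; apply: xgetPex.
  have sp : 0 < sv ip T (xs ip T) m by apply: lt_trans (hs m).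
  have [z [f [f1 fo] <-] hz] : exists2 z, [set `|T f| | f in Sset ip (xs ip T) m] z & sv ip T (xs ip T) m / 2 < z.
    apply: sup_gt; first by case: (sv_has_sup T M (xs ip T) m hip hT hM M0).
    rewrite /sv ltr_pdivrMr // ltr_pMr //; lra.
  have fn0 : f != 0.
    apply/negP => /eqP f0; move: hz; rewrite f0 T0 normr0 => hz.
    have : 0 < sv ip T (xs ip T) m / 2 by rewrite divr_gt0.
    lra.
  have nf0 : 0 < `|f| by rewrite normr_gt0.
  exists (`|f|^-1 *: f); split; [|split].
  - rewrite (ipZl hip) (ipZr hip) -(ip_norm2 hip) expr2.
    by field; rewrite gt_eqF.
  - by move=> j jm; rewrite (ipZl hip) fo // mulr0.
  - rewrite hZ normrZ ger0_norm ?invr_ge0 ?ltW //.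
    apply: lt_le_trans hz _; rewrite mulrC ler_pdivlMr //.
    by rewrite -[leRHS]mulr1 ler_wpM2l.
have unit : forall m, ip (xs ip T m) (xs ip T m) = 1 by move=> m; case: (step1 m).
have big : forall m, e / 2 < `|T (xs ip T m)|.
  move=> m; case: (step1 m) => _ [_ h]; apply: le_lt_trans h.
  by rewrite ler_pM2r // ?invr_gt0 // ltW.
have xs1 : forall m, `|xs ip T m| = 1.
  move=> m; have := ip_norm2 hip (xs ip T m); rewrite unit => h.
  by apply/eqP; rewrite -(@eqrXn2 _ 2) // ?expr1n ?h //; apply/eqP.
pose B := [set f : H | `|f| <= 1].
have cpt : compact (closure (T @` B)) by apply: hC; exists 1.
have [y [_ cy]] : closure (T @` B) `&` cluster ((fun m => T (xs ip T m)) @ \oo) !=set0.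
  apply: (cpt ((fun m => T (xs ip T m)) @ \oo)); exists 0%N => // m _ /=.
  apply: subset_closure; exists (xs ip T m) => //.
  by rewrite /B /= xs1.
pose d := e / 8.
have d0 : 0 < d by rewrite divr_gt0.
have hyN : forall N, exists m, (N <= m)%N /\ `|y - T (xs ip T m)| < d.
  move=> N.
  have := cy [set z | exists m, (N <= m)%N /\ z = T (xs ip T m)] (ball y d).
  case.
  - by exists N => // m /= Nm; exists m.
  - exact: nbhsx_ballx.
  move=> _ [[m [Nm ->]] hb]; exists m; split => //.
  by move: hb; rewrite -ball_normE.
have ind : forall N : nat, exists f K, [/\ ip f f = N%:R,
    (forall m, (K < m)%N -> ip f (xs ip T m) = 0) & `|T f - N%:R *: y| <= N%:R * d].
  elim=> [|N [f [K [h1 h2 h3]]]].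
    exists 0, 0%N; split; first exact: (ip0l hip).
      by move=> m _; exact: (ip0l hip).
    by rewrite T0 scale0r subrr normr0 mul0r.
  have [m [Km hm]] := hyN K.+1.
  exists (f + xs ip T m), m; split.
  - rewrite (pyth hip) ?h2 // h1 unit; exact: natr1.
  - move=> m' mm; rewrite (ipDl hip) h2; last by lia.
    rewrite (xs_orth _ hip) ?addr0 //. lia.
  - rewrite hT -natr1 scalerDl scale1r.
    have -> : T f + T (xs ip T m) - (N%:R *: y + y) = (T f - N%:R *: y) + (T (xs ip T m) - y).
      by rewrite opprD addrACA.
    apply: (le_trans (ler_normD _ _)); rewrite mulrDl mul1r.
    by apply: lerD => //; rewrite distrC; exact: ltW.
pose N := Num.bound (16 * M ^+ 2 / e ^+ 2).
have hN : 16 * M ^+ 2 / e ^+ 2 < N%:R.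
  apply: archi_boundP; apply: divr_ge0; last exact: exprn_ge0 (ltW e0).
  by apply: mulr_ge0 => //; exact: exprn_ge0.
have [f [K [h1 _ h3]]] := ind N.
have [m [_ hm]] := hyN 0%N.
have ha : 3 * e / 8 < `|y|.
  have := norm_tri (T (xs ip T m)) y; have := big m.
  move: hm; rewrite /d => hm; lra.
have hna : N%:R * `|y| <= `|T f| + N%:R * (e / 8).
  have := norm_tri (N%:R *: y) (T f); rewrite normrZ ger0_norm // => h.
  apply: (le_trans h); rewrite lerD2l; exact: h3.
apply: (@final_arith R e M N%:R `|y| `|T f| `|f| e0 M0 ha hna (hM f) _ (normr_ge0 f) hN).
by rewrite (ip_norm2 hip).
Qed.

Theorem theorem2
  (R : realType) (X : Type) (H : completeNormedModType R)
  (ip : H -> H -> R) (ev : H -> X -> R)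
  (G : Type) (mul : G -> G -> G) (one : G) (inv : G -> G)
  (act : G -> H -> H) (T : H -> H) :
  is_inner_product ip ->
  separable H ->
  injective ev ->
  (forall a f1 f2, ev (a *: f1 + f2) = (fun x => a * ev f1 x + ev f2 x)) ->
  is_group mul one inv ->
  (forall g f1 f2, act g (f1 + f2) = act g f1 + act g f2) ->
  (forall g (a : R) f, act g (a *: f) = a *: act g f) ->
  (forall f, act one f = f) ->
  (forall g h f, act h (act g f) = act (mul h g) f) ->
  (forall g f1 f2, ip (act g f1) (act g f2) = ip f1 f2) ->
  (forall f1 f2, T (f1 + f2) = T f1 + T f2) ->
  (forall (a : R) f, T (a *: f) = a *: T f) ->
  bounded_operator T ->
  compact_operator T ->
  exists (E : forall n : nat, ('I_(2 * n).+1 -> H) -> H) (t : nat -> H),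
    (forall n, (0 < n)%N -> continuous_multi (E n)) /\
    (forall n, (0 < n)%N -> forall g (fs : 'I_(2 * n).+1 -> H),
        E n (fun i => act g (fs i)) = act g (E n fs)) /\
    (op_norm (fun f => T f - E n (@args H n f t)) @[n --> \oo] --> 0%E).
Proof.
move=> hip _ _ _ _ hD hZ _ _ hI hTD hTZ [M0 hM0] hC.
pose M := `|M0|.
have hM : forall f, `|T f| <= M * `|f|.
  by move=> f; apply: (le_trans (hM0 f)); apply: ler_wpM2r => //; exact: ler_norm.
have Mge0 : 0 <= M by exact: normr_ge0.
have TB : forall a b, T (a - b) = T a - T b.
  by move=> a b; rewrite hTD -scaleN1r hTZ scaleN1r.
exists (fun n => Esum ip n n), (tseq T (xs ip T)).
split; first by move=> n _; exact: Esum_cont.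
split; first by move=> n _ g fs; exact: Esum_equiv (hD g) (hZ g) (hI g) fs.
have hbound : forall n f, `|f| <= 1 ->
    `|T f - Esum ip n n (@args H n f (tseq T (xs ip T)))| <= sv ip T (xs ip T) n.
  move=> n f f1; rewrite (Esum_args _ _ _ _ hip hTD hTZ) // -TB.
  apply: (sv_bound _ _ _ _ hip hTD hM Mge0); split.
    exact: le_trans (res_norm _ _ hip (xs_orth T hip) (xs_unit T) n) f1.
  by move=> j jn; apply: (res_orth _ _ hip (xs_orth T hip) (xs_unit T)).
have hle : forall n, (op_norm (fun f : H => (T f - Esum ip n n (@args H n f (tseq T (xs ip T))))%R)
    <= (sv ip T (xs ip T) n)%:E)%E.
  move=> n; apply: ge_ereal_sup => _ [f f1 <-]; rewrite lee_fin; exact: hbound.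
have hge : forall n, (0 <= op_norm (fun f : H => (T f - Esum ip n n (@args H n f (tseq T (xs ip T))))%R))%E.
  move=> n; apply: le_ereal_sup_tmp.
  exists (`|T 0 - Esum ip n n (@args H n 0 (tseq T (xs ip T)))|%:E).
    by exists 0 => //; rewrite /= normr0.
  by rewrite lee_fin.
apply/fine_cvgP; split.
  apply: nearW => n; rewrite ge0_fin_numE //; exact: le_lt_trans (hle n) (ltry _).
apply/cvgrPdist_le => eps eps0.
have [N hN] := sv_to0 T M hip hTD hTZ hM Mge0 hC eps eps0.
exists N => // n /= Nn.
move: (hle n) (hge n); case: (op_norm _) => [r| |] //=; rewrite ?lee_fin => h1 h2.
rewrite sub0r normrN ger0_norm //; apply: (le_trans h1); apply: le_trans hN.
exact: (sv_mono _ _ _ _ _ hip hTD hM Mge0).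
Qed.
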